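(* Let $\gamma>0$ and let $\mathcal{W}_\gamma\subseteq(\mathbb{C}^M)^G$ be either the sum-power set $\{\mathbf{w}:\sum_{g\in\mathcal{G}}\|\mathbf{w}_g\|_2^2\le\gamma\}$ or the per-antenna-power set $\{\mathbf{w}:\sum_{g\in\mathcal{G}}|[\mathbf{w}_g]_m|^2\le\gamma,\ m=1,\dots,M\}$, where $[\mathbf{w}_g]_m$ is the $m$-th entry of $\mathbf{w}_g$. Consider $$V_{\mathrm{MMF}}=\sup_{\mathbf{w}\in\mathcal{W}_\gamma}\ \min_{g\in\mathcal{G},\,i\in\mathcal{N}_g}\ \inf_{\mathbf{e}_{ig}\in\mathcal{S}_{ig}}\mathrm{SINR}_{ig}(\mathbf{w},\mathbf{e}_{ig}),$$ $$V_{\mathrm{App}}=\sup\big\{t\ge 0:\ \exists\,\mathbf{w}\in\mathcal{W}_\gamma \text{ with } \zeta_{ig}(\mathbf{w},t)-|\mathbf{w}_g^H\hat{\mathbf{h}}_{ig}|\le 0\ \ \forall i\in\mathcal{N}_g,g\in\mathcal{G}\big\}.$$ Then: (a) if $t\ge0$ and $\mathbf{w}\in\mathcal{W}_\gamma$ satisfy $\zeta_{ig}(\mathbf{w},t)-|\mathbf{w}_g^H\hat{\mathbf{h}}_{ig}|\le 0$ for all $i\in\mathcal{N}_g,g\in\mathcal{G}$, then $\mathrm{SINR}_{ig}(\mathbf{w},\mathbf{e}_{ig})\ge t$ for all $i\in\mathcal{N}_g$, $g\in\mathcal{G}$, $\mathbf{e}_{ig}\in\mathcal{S}_{ig}$;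 (b) $V_{\mathrm{App}}\le V_{\mathrm{MMF}}$; (c) if $G=1$ and $\mathbf{C}_{i1}=\mu^{-2}\mathbf{I}_M$ for all $i\in\mathcal{N}_1$ with a constant $\mu>0$, then $V_{\mathrm{App}}=V_{\mathrm{MMF}}$.
   Context: Setting: $M\ge1$, $G\ge 1$, $\mathcal{G}=\{1,\dots,G\}$, finite nonempty index sets $\mathcal{N}_g$; for $i\in\mathcal{N}_g$, $g\in\mathcal{G}$: $\hat{\mathbf{h}}_{ig}\in\mathbb{C}^M$, $\sigma_{ig}>0$, $\mathbf{C}_{ig}$ Hermitian positive definite, $\varepsilon_{ig}=1/\sqrt{\lambda_{\min}(\mathbf{C}_{ig})}$, $\mathcal{S}_{ig}=\{\mathbf{e}\in\mathbb{C}^M:\mathbf{e}^H\mathbf{C}_{ig}\mathbf{e}\le 1\}$. For $\mathbf{w}=(\mathbf{w}_l)_{l\in\mathcal{G}}$, $\mathbf{w}_l\in\mathbb{C}^M$: $$\mathrm{SINR}_{ig}(\mathbf{w},\mathbf{e}_{ig})=\frac{|\mathbf{w}_g^H(\hat{\mathbf{h}}_{ig}+\mathbf{e}_{ig})|^2}{\sum_{l\in\mathcal{G},l\ne g}|\mathbf{w}_l^H(\hat{\mathbf{h}}_{ig}+\mathbf{e}_{ig})|^2+\sigma_{ig}^2},$$ and for $\tau\ge0$, $$\zeta_{ig}(\mathbf{w},\tau)=\varepsilon_{ig}\|\mathbf{w}_g\|_2+\sqrt{\tau}\,\sqrt{\sum_{l\in\mathcal{G},l\ne g}\big(|\mathbf{w}_l^H\hat{\mathbf{h}}_{ig}|+\varepsilon_{ig}\|\mathbf{w}_l\|_2\big)^2+\sigma_{ig}^2}.$$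 *)

(* Defs.v *)
From Stdlib Require Import Reals Lra ClassicalEpsilon.
Open Scope R_scope.

Record Cplx := mkC { cre : R ; cim : R }.
Definition C0 : Cplx := mkC 0 0.
Definition Cadd (a b : Cplx) : Cplx := mkC (cre a + cre b) (cim a + cim b).
Definition Cmul (a b : Cplx) : Cplx :=
  mkC (cre a * cre b - cim a * cim b) (cre a * cim b + cim a * cre b).
Definition Cconj (a : Cplx) : Cplx := mkC (cre a) (- cim a).
Definition Cnorm2 (a : Cplx) : R := cre a * cre a + cim a * cim a.
Definition Cabs (a : Cplx) : R := sqrt (Cnorm2 a).
Definition RtoC (r : R) : Cplx := mkC r 0.

Fixpoint rsum (n : nat) (f : nat -> R) : R :=
  match n with O => 0 | S k => rsum k f + f k end.
Fixpoint csum (n : nat) (f : nat -> Cplx) : Cplx :=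
  match n with O => C0 | S k => Cadd (csum k f) (f k) end.

(* minimum of f 0, ..., f (n-1)  (meaningful for n >= 1) *)
Fixpoint fmin (n : nat) (f : nat -> R) : R :=
  match n with
  | O => 0
  | S k => match k with O => f O | _ => Rmin (fmin k f) (f k) end
  end.

(* ---------- vectors in C^M and M x M matrices (entries at indices < M) ---------- *)
Definition cvec := nat -> Cplx.
Definition cmat := nat -> nat -> Cplx.
Definition vadd (u v : cvec) : cvec := fun k => Cadd (u k) (v k).
Definition vdot (M : nat) (u v : cvec) : Cplx :=
  csum M (fun k => Cmul (Cconj (u k)) (v k)).
Definition vnorm (M : nat) (u : cvec) : R := sqrt (rsum M (fun k => Cnorm2 (u k))).
Definition matvec (M : nat) (A : cmat) (v : cvec) : cvec :=
  fun k => csum M (fun l => Cmul (A k l) (v l)).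

Definition Hermitian (M : nat) (A : cmat) : Prop :=
  forall k l, (k < M)%nat -> (l < M)%nat -> A k l = Cconj (A l k).
Definition nonzero_vec (M : nat) (v : cvec) : Prop := exists k, (k < M)%nat /\ v k <> C0.
Definition HermitianPD (M : nat) (A : cmat) : Prop :=
  Hermitian M A /\
  forall v, nonzero_vec M v -> 0 < cre (vdot M v (matvec M A v)).

(* (real) eigenvalue; eigenvalues of a Hermitian matrix are all real *)
Definition is_eigenvalue (M : nat) (A : cmat) (lam : R) : Prop :=
  exists v, nonzero_vec M v /\
    forall k, (k < M)%nat -> matvec M A v k = Cmul (RtoC lam) (v k).

(* Sup P is the least upper bound of P whenever it exists (chosen by epsilon). *)
Definition Sup (P : R -> Prop) : R := epsilon (inhabits 0) (fun x => is_lub P x).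
Definition Inf (P : R -> Prop) : R := - Sup (fun x => P (- x)).

Definition lambda_min (M : nat) (A : cmat) : R := Inf (is_eigenvalue M A).

(* groups g in {0..G-1}; users i of group g in {0..N g - 1};
   hhat i g, sigma i g, Cm i g are the data; beamformer w : nat -> cvec (w g). *)

Definition epsig (M : nat) (Cm : nat -> nat -> cmat) (i g : nat) : R :=
  1 / sqrt (lambda_min M (Cm i g)).

Definition in_S (M : nat) (Cm : nat -> nat -> cmat) (i g : nat) (e : cvec) : Prop :=
  cre (vdot M e (matvec M (Cm i g) e)) <= 1.

Definition SINR (M G : nat) (hhat : nat -> nat -> cvec) (sigma : nat -> nat -> R)
  (w : nat -> cvec) (i g : nat) (e : cvec) : R :=
  let h := vadd (hhat i g) e in
  Cnorm2 (vdot M (w g) h) /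
  (rsum G (fun l => if Nat.eq_dec l g then 0 else Cnorm2 (vdot M (w l) h))
   + sigma i g ^ 2).

Definition zeta (M G : nat) (hhat : nat -> nat -> cvec) (sigma : nat -> nat -> R)
  (Cm : nat -> nat -> cmat) (w : nat -> cvec) (t : R) (i g : nat) : R :=
  epsig M Cm i g * vnorm M (w g) +
  sqrt t * sqrt (rsum G (fun l => if Nat.eq_dec l g then 0 else
                          (Cabs (vdot M (w l) (hhat i g)) + epsig M Cm i g * vnorm M (w l)) ^ 2)
                 + sigma i g ^ 2).

Inductive PowerConstraint := SumPower | PerAntennaPower.

Definition in_W (M G : nat) (pc : PowerConstraint) (gamma : R) (w : nat -> cvec) : Prop :=
  match pc with
  | SumPower => rsum G (fun g => vnorm M (w g) ^ 2) <= gamma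
  | PerAntennaPower => forall m, (m < M)%nat -> rsum G (fun g => Cnorm2 (w g m)) <= gamma
  end.

Definition worst_SINR (M G : nat) (N : nat -> nat) (hhat : nat -> nat -> cvec)
  (sigma : nat -> nat -> R) (Cm : nat -> nat -> cmat) (w : nat -> cvec) : R :=
  fmin G (fun g => fmin (N g) (fun i =>
    Inf (fun s => exists e, in_S M Cm i g e /\ s = SINR M G hhat sigma w i g e))).

Definition V_MMF (M G : nat) (N : nat -> nat) (hhat : nat -> nat -> cvec)
  (sigma : nat -> nat -> R) (Cm : nat -> nat -> cmat) (pc : PowerConstraint) (gamma : R) : R :=
  Sup (fun r => exists w, in_W M G pc gamma w /\ r = worst_SINR M G N hhat sigma Cm w).

Definition app_feasible (M G : nat) (N : nat -> nat) (hhat : nat -> nat -> cvec)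
  (sigma : nat -> nat -> R) (Cm : nat -> nat -> cmat) (w : nat -> cvec) (t : R) : Prop :=
  forall g i, (g < G)%nat -> (i < N g)%nat ->
    zeta M G hhat sigma Cm w t i g - Cabs (vdot M (w g) (hhat i g)) <= 0.

Definition V_App (M G : nat) (N : nat -> nat) (hhat : nat -> nat -> cvec)
  (sigma : nat -> nat -> R) (Cm : nat -> nat -> cmat) (pc : PowerConstraint) (gamma : R) : R :=
  Sup (fun t => 0 <= t /\ exists w, in_W M G pc gamma w /\ app_feasible M G N hhat sigma Cm w t).

(* Main.v *)
Require Import Defs.
From Stdlib Require Import Reals Lra Lia ClassicalEpsilon Classical.
From mathcomp Require all_boot all_order all_algebra complex spectral sesquilinear Rstruct.
Open Scope R_scope.
Module MC.
Import all_boot all_order all_algebra complex spectral sesquilinear Rstruct.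
Import Order.TTheory GRing.Theory Num.Theory.
Local Open Scope ring_scope.
Local Open Scope complex_scope.
Local Open Scope sesquilinear_scope.
Notation RR := Rdefinitions.R.
Notation RC := (RR[i]).

Section Key.
Variable n : nat.
Variable A : 'M[RC]_n.+1.
Hypothesis HA : A \is hermsymmx.

Lemma spectral_key : exists d0 : RR, exists2 v : 'cV[RC]_n.+1, v != 0 &
  (A *m v = d0%:C *: v /\ forall x : 'cV[RC]_n.+1,
     d0%:C * (x^t* *m x) 0 0 <= (x^t* *m A *m x) 0 0).
Proof.
have AN : A \is normalmx by exact: hermitian_normalmx.
have EA : A = invmx (spectralmx A) *m diag_mx (spectral_diag A) *m spectralmx A
  by exact/orthomx_spectralP.
set P := spectralmx A in EA *; set d := spectral_diag A in EA *.
have PU : P \is unitarymx by exact: spectral_unitarymx.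
have iP : invmx P = P^t* by exact: invmx_unitary.
have dR : d \is a realmx by exact: hermitian_spectral_diag_real.
have dRe : forall j, d 0 j = (complex.Re (d 0 j))%:C.
  move=> j; have := mxOverP dR 0 j; case: (d 0 j) => a b.
  by rewrite complex_real => /eqP -> /=.
have [jm _ Hj0] := @arg_minP _ _ 'I_n.+1 ord0 predT (fun j => complex.Re (d 0 j)) isT.
exists (complex.Re (d 0 jm)).
have PQ : P *m P^t* = 1%:M by exact/unitarymxP.
have QP : P^t* *m P = 1%:M by rewrite -iP mulVmx // unitarymx_unit.
rewrite iP in EA.
exists (col jm (P^t* )); [|split].
- apply/eqP => h0.
  have H : delta_mx jm 0 = (0 : 'cV[RC]_n.+1).
    by rewrite -(mulmx0 _ P) -h0 colE mulmxA PQ mul1mx.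
  have := congr1 (fun M : 'cV[RC]_n.+1 => M jm 0) H.
  rewrite /= !mxE !eqxx /=. move/eqP. by rewrite oner_eq0.
- have -> : A *m col jm (P^t* ) = col jm (P^t* *m diag_mx d).
    by rewrite !colE EA -!mulmxA (mulmxA P) PQ mul1mx.
  apply/matrixP => i j; rewrite [LHS]mxE mul_mx_diag !mxE -dRe mulrC //.
- move=> x; rewrite EA.
  set y := P *m x.
  have Ex : x^t* *m P^t* = y^t*.
    by rewrite /y trmx_mul map_mxM.
  have -> : x^t* *m (P^t* *m diag_mx d *m P) *m x = y^t* *m diag_mx d *m y.
    by rewrite /y !mulmxA Ex.
  have -> : x^t* *m x = y^t* *m y.
    by rewrite -Ex /y -mulmxA (mulmxA _ P) QP mul1mx.
  rewrite !mxE mulr_sumr; apply: ler_sum => j _.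
  rewrite mul_mx_diag [(\matrix_(_, _) _) 0 j]mxE [_ * d 0 j]mulrC -mulrA.
  apply: ler_wpM2r.
    by rewrite !mxE mulrC; exact: mul_conjC_ge0.
  rewrite [X in _ <= X]dRe lecR; exact: Hj0.
Qed.
End Key.

Definition toC (z : Cplx) : RC := (cre z) +i* (cim z).
Definition ofC (z : RC) : Cplx := mkC (complex.Re z) (complex.Im z).
Lemma toC_ofC z : toC (ofC z) = z. Proof. by case: z. Qed.
Lemma toC_inj a b : toC a = toC b -> a = b.
Proof. by case: a => ? ?; case: b => ? ? [-> ->]. Qed.
Lemma toC_add a b : toC (Cadd a b) = toC a + toC b. Proof. by []. Qed.
Lemma toC_mul a b : toC (Cmul a b) = toC a * toC b. Proof. by []. Qed.
Lemma toC_conj a : toC (Cconj a) = Num.conj (toC a). Proof. by []. Qed.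
Lemma toC_0 : toC C0 = 0. Proof. by []. Qed.
Lemma toC_csum n f : toC (csum n f) = \sum_(k < n) toC (f k).
Proof.
elim: n => [|n IH]; first by rewrite big_ord0.
by rewrite big_ord_recr /= toC_add IH.
Qed.

Lemma Re_scal (r : RR) (w : RC) : complex.Re (r%:C * w) = r * complex.Re w.
Proof. by case: w => a b /=; rewrite mul0r subr0. Qed.

Lemma bridge (n : nat) (Cm : cmat) : Defs.Hermitian n.+1 Cm ->
  exists d0 : RR, is_eigenvalue n.+1 Cm d0 /\
   forall e : cvec, Rle (Rmult d0 (cre (vdot n.+1 e e)))
                        (cre (vdot n.+1 e (matvec n.+1 Cm e))).
Proof.
move=> Hh.
pose A : 'M[RC]_n.+1 := \matrix_(k, l) toC (Cm k l).
have HA : A \is hermsymmx.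
  apply/is_hermitianmxP; rewrite expr0 scale1r; apply/matrixP => k l.
  by rewrite !mxE (Hh k l) ?toC_conj //; apply/ssrnat.ltP.
have [d0 [v vnz [Av Hq]]] := @spectral_key n A HA.
exists d0; split.
- exists (fun k => if (k < n.+1)%N then ofC (v (inord k) 0) else C0); split.
  + case: (pickP (fun j => v j 0 != 0)) => [j Hj|H0].
      exists j; split; first exact/ssrnat.ltP.
      rewrite ltn_ord inord_val => E; move/negP: Hj; apply.
      by rewrite -[v j 0]toC_ofC E.
    exfalso; move/negP: vnz; apply; apply/eqP/matrixP => i j; rewrite ord1 mxE.
    by move/negbFE/eqP: (H0 i).
  + move=> k /ssrnat.ltP Hk; apply: toC_inj; rewrite toC_csum toC_mul Hk toC_ofC.
    have -> : toC (RtoC d0) = d0%:C by [].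
    have -> : d0%:C * v (inord k) 0 = (A *m v) (inord k) 0 by rewrite Av !mxE.
    rewrite !mxE; apply: eq_bigr => l _; rewrite toC_mul ltn_ord inord_val.
    by rewrite toC_ofC mxE inordK.
- move=> e; pose x : 'cV[RC]_n.+1 := \col_k toC (e k).
  have E1 : toC (vdot n.+1 e e) = (x^t* *m x) 0 0.
    rewrite /vdot toC_csum !mxE; apply: eq_bigr => k _.
    by rewrite toC_mul toC_conj !mxE.
  have E2 : toC (vdot n.+1 e (matvec n.+1 Cm e)) = (x^t* *m A *m x) 0 0.
    rewrite -mulmxA /vdot toC_csum !mxE; apply: eq_bigr => k _.
    rewrite toC_mul toC_conj !mxE toC_csum; congr (_ * _).
    by apply: eq_bigr => l _; rewrite toC_mul !mxE.
  have := Hq x; rewrite -E1 -E2 lecE => /andP [_ H].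
  by apply/RleP; move: H; rewrite Re_scal.
Qed.
End MC.

Lemma Sup_lub (P : R -> Prop) : (exists x, P x) -> (exists B, forall x, P x -> x <= B) ->
  is_lub P (Sup P).
Proof.
  intros [x Hx] [B HB]. unfold Sup. apply epsilon_spec.
  destruct (completeness P) as [m Hm].
  - exists B. intros y Hy. apply HB; exact Hy.
  - exists x; exact Hx.
  - exists m; exact Hm.
Qed.

Lemma lub_ub P s x : is_lub P s -> P x -> x <= s.
Proof. intros [H _] Hx. apply H; exact Hx. Qed.

Lemma lub_least P s b : is_lub P s -> (forall x, P x -> x <= b) -> s <= b.
Proof. intros [_ H] Hb. apply H. intros y Hy; apply Hb; exact Hy. Qed.

Lemma Inf_glb (P : R -> Prop) L : (exists x, P x) -> (forall x, P x -> L <= x) ->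
  (forall x, P x -> Inf P <= x) /\ (forall L', (forall x, P x -> L' <= x) -> L' <= Inf P).
Proof.
  intros [x0 Hx0] Hlb.
  assert (Hl : is_lub (fun x => P (- x)) (Sup (fun x => P (- x)))).
  { apply Sup_lub.
    - exists (- x0). rewrite Ropp_involutive. exact Hx0.
    - exists (- L). intros y Hy. specialize (Hlb _ Hy). lra. }
  unfold Inf. split.
  - intros x Hx. assert (- x <= Sup (fun x => P (- x))).
    { apply (lub_ub _ _ _ Hl). rewrite Ropp_involutive. exact Hx. }
    lra.
  - intros L' HL'. assert (Sup (fun x => P (- x)) <= - L').
    { apply (lub_least _ _ _ Hl). intros y Hy. specialize (HL' _ Hy). lra. }
    lra.
Qed.

Lemma fmin_le n f k : (k < n)%nat -> fmin n f <= f k.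
Proof.
  induction n as [|n IH]; intros Hk; [lia|].
  destruct n as [|n].
  - simpl. assert (k = 0%nat) by lia. subst. lra.
  - change (fmin (S (S n)) f) with (Rmin (fmin (S n) f) (f (S n))).
    destruct (Nat.eq_dec k (S n)) as [->|Hne].
    + apply Rmin_r.
    + eapply Rle_trans; [apply Rmin_l|]. apply IH. lia.
Qed.

Lemma fmin_ge n f c : (1 <= n)%nat -> (forall k, (k < n)%nat -> c <= f k) -> c <= fmin n f.
Proof.
  induction n as [|n IH]; intros Hn H; [lia|].
  destruct n as [|n].
  - simpl. apply H. lia.
  - change (fmin (S (S n)) f) with (Rmin (fmin (S n) f) (f (S n))).
    apply Rmin_glb.
    + apply IH; [lia|]. intros k Hk; apply H; lia.
    + apply H; lia.
Qed.

Lemma rsum_ext n f g : (forall k, (k < n)%nat -> f k = g k) -> rsum n f = rsum n g.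
Proof.
  induction n as [|n IH]; intros H; simpl; [reflexivity|].
  rewrite IH by (intros; apply H; lia). rewrite (H n) by lia. reflexivity.
Qed.

Lemma rsum_le n f g : (forall k, (k < n)%nat -> f k <= g k) -> rsum n f <= rsum n g.
Proof.
  induction n as [|n IH]; intros H; simpl; [lra|].
  assert (rsum n f <= rsum n g) by (apply IH; intros; apply H; lia).
  assert (f n <= g n) by (apply H; lia). lra.
Qed.

Lemma rsum_nonneg n f : (forall k, (k < n)%nat -> 0 <= f k) -> 0 <= rsum n f.
Proof.
  intros H. replace 0 with (rsum n (fun _ => 0)).
  - apply rsum_le. exact H.
  - induction n; simpl; [reflexivity|]. rewrite IHn; [lra|]. intros; apply H; lia.
Qed.

Lemma rsum_add n f g : rsum n (fun k => f k + g k) = rsum n f + rsum n g.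
Proof. induction n; simpl; [lra|]. rewrite IHn. lra. Qed.

Lemma rsum_scal n c f : rsum n (fun k => c * f k) = c * rsum n f.
Proof. induction n; simpl; [lra|]. rewrite IHn. lra. Qed.

Lemma rsum_term n f k : (forall j, (j < n)%nat -> 0 <= f j) -> (k < n)%nat -> f k <= rsum n f.
Proof.
  induction n as [|n IH]; intros H Hk; [lia|]. simpl.
  destruct (Nat.eq_dec k n) as [->|Hne].
  - assert (0 <= rsum n f) by (apply rsum_nonneg; intros; apply H; lia). lra.
  - assert (f k <= rsum n f) by (apply IH; [intros; apply H; lia|lia]).
    assert (0 <= f n) by (apply H; lia). lra.
Qed.

Lemma rsum_delta n k f : (k < n)%nat ->
  rsum n (fun l => if Nat.eq_dec k l then f l else 0) = f k.
Proof.
  induction n as [|n IH]; intros Hk; [lia|]. simpl.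
  destruct (Nat.eq_dec k n) as [->|Hne].
  - replace (rsum n (fun l => if Nat.eq_dec n l then f l else 0)) with (rsum n (fun _ => 0)).
    + replace (rsum n (fun _ => 0)) with 0; [lra|].
      clear. induction n; simpl; lra.
    + apply rsum_ext. intros j Hj. destruct (Nat.eq_dec n j); [lia|reflexivity].
  - rewrite IH by lia. lra.
Qed.

Lemma csum_re n f : cre (csum n f) = rsum n (fun k => cre (f k)).
Proof. induction n; simpl; [reflexivity|]. rewrite IHn. reflexivity. Qed.
Lemma csum_im n f : cim (csum n f) = rsum n (fun k => cim (f k)).
Proof. induction n; simpl; [reflexivity|]. rewrite IHn. reflexivity. Qed.

Lemma vdot_re n a b : cre (vdot n a b) =
  rsum n (fun k => cre (a k) * cre (b k) + cim (a k) * cim (b k)).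
Proof. unfold vdot. rewrite csum_re. apply rsum_ext. intros; simpl; ring. Qed.
Lemma vdot_im n a b : cim (vdot n a b) =
  rsum n (fun k => cre (a k) * cim (b k) - cim (a k) * cre (b k)).
Proof. unfold vdot. rewrite csum_im. apply rsum_ext. intros; simpl; ring. Qed.

Definition vn2 n (e : cvec) := rsum n (fun k => Cnorm2 (e k)).

Lemma Cnorm2_nonneg z : 0 <= Cnorm2 z.
Proof. unfold Cnorm2. nra. Qed.
Lemma vn2_nonneg n e : 0 <= vn2 n e.
Proof. apply rsum_nonneg. intros; apply Cnorm2_nonneg. Qed.
Lemma vnorm_sq n e : vnorm n e ^ 2 = vn2 n e.
Proof. unfold vnorm. rewrite pow2_sqrt; [reflexivity|apply vn2_nonneg]. Qed.
Lemma vnorm_nonneg n e : 0 <= vnorm n e.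
Proof. apply sqrt_pos. Qed.
Lemma Cabs_sq z : Cabs z ^ 2 = Cnorm2 z.
Proof. unfold Cabs. rewrite pow2_sqrt; [reflexivity|apply Cnorm2_nonneg]. Qed.
Lemma Cabs_nonneg z : 0 <= Cabs z.
Proof. apply sqrt_pos. Qed.
Lemma vdot_self n e : cre (vdot n e e) = vn2 n e.
Proof. rewrite vdot_re. apply rsum_ext. intros; unfold Cnorm2; ring. Qed.

Lemma Cext a b : cre a = cre b -> cim a = cim b -> a = b.
Proof. destruct a, b; simpl; intros; subst; reflexivity. Qed.

Lemma sq_le_le x y : 0 <= y -> x ^ 2 <= y ^ 2 -> x <= y.
Proof. intros. nra. Qed.

Lemma CS_step R0 I0 r i A B al be : 0 <= A -> 0 <= B -> 0 <= al -> 0 <= be ->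
  R0 ^ 2 + I0 ^ 2 <= A * B -> r ^ 2 + i ^ 2 = al * be ->
  (R0 + r) ^ 2 + (I0 + i) ^ 2 <= (A + al) * (B + be).
Proof.
  intros HA HB Hal Hbe H1 H2.
  set (X := R0 * r + I0 * i).
  assert (HX : X ^ 2 <= (A * be) * (B * al)).
  { assert (X ^ 2 <= (R0 ^ 2 + I0 ^ 2) * (r ^ 2 + i ^ 2)).
    { assert ((R0 ^ 2 + I0 ^ 2) * (r ^ 2 + i ^ 2) - X ^ 2 = (R0 * i - I0 * r) ^ 2)
        by (unfold X; ring).
      pose proof (pow2_ge_0 (R0 * i - I0 * r)). lra. }
    assert ((R0 ^ 2 + I0 ^ 2) * (r ^ 2 + i ^ 2) <= (A * B) * (al * be)).
    { rewrite H2. apply Rmult_le_compat_r; [nra|exact H1]. }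
    nra. }
  assert (HP : 0 <= A * be) by nra. assert (HQ : 0 <= B * al) by nra.
  assert (H2X : 2 * X <= A * be + B * al).
  { apply sq_le_le; [lra|].
    assert ((A * be + B * al) ^ 2 = 4 * ((A * be) * (B * al)) + (A * be - B * al) ^ 2) by ring.
    pose proof (pow2_ge_0 (A * be - B * al)).
    replace ((2 * X) ^ 2) with (4 * X ^ 2) by ring. lra. }
  assert ((R0 + r) ^ 2 + (I0 + i) ^ 2 = (R0 ^ 2 + I0 ^ 2) + 2 * X + (r ^ 2 + i ^ 2)).
  { unfold X. ring. }
  nra.
Qed.

Lemma CS n a b : Cnorm2 (vdot n a b) <= vn2 n a * vn2 n b.
Proof.
  unfold Cnorm2. rewrite vdot_re, vdot_im. unfold vn2.
  induction n as [|n IH]; simpl; [lra|].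
  pose proof (CS_step (rsum n (fun k => cre (a k) * cre (b k) + cim (a k) * cim (b k)))
     (rsum n (fun k => cre (a k) * cim (b k) - cim (a k) * cre (b k))) (cre (a n) * cre (b n) + cim (a n) * cim (b n))
     (cre (a n) * cim (b n) - cim (a n) * cre (b n))
     (rsum n (fun k => Cnorm2 (a k))) (rsum n (fun k => Cnorm2 (b k)))
     (Cnorm2 (a n)) (Cnorm2 (b n))) as H.
  assert (HA : 0 <= rsum n (fun k => Cnorm2 (a k))) by (apply rsum_nonneg; intros; apply Cnorm2_nonneg).
  assert (HB : 0 <= rsum n (fun k => Cnorm2 (b k))) by (apply rsum_nonneg; intros; apply Cnorm2_nonneg).
  specialize (H HA HB (Cnorm2_nonneg _) (Cnorm2_nonneg _)).
  simpl in H. unfold Cnorm2 in *. nra.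
Qed.

Lemma CS_abs n a b : Cabs (vdot n a b) <= vnorm n a * vnorm n b.
Proof.
  apply sq_le_le.
  - apply Rmult_le_pos; apply vnorm_nonneg.
  - rewrite Cabs_sq. rewrite Rpow_mult_distr, !vnorm_sq. apply CS.
Qed.

Lemma Cabs_tri z w : Cabs (Cadd z w) <= Cabs z + Cabs w /\ Cabs z - Cabs w <= Cabs (Cadd z w).
Proof.
  pose proof (Cabs_sq z) as Hz. pose proof (Cabs_sq w) as Hw.
  pose proof (Cabs_sq (Cadd z w)) as Hs.
  pose proof (Cabs_nonneg z). pose proof (Cabs_nonneg w). pose proof (Cabs_nonneg (Cadd z w)).
  set (X := cre z * cre w + cim z * cim w).
  assert (HX2 : X ^ 2 <= (Cabs z * Cabs w) ^ 2).
  { rewrite Rpow_mult_distr, Hz, Hw. unfold X, Cnorm2.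
    pose proof (pow2_ge_0 (cre z * cim w - cim z * cre w)).
    assert ((cre z * cre z + cim z * cim z) * (cre w * cre w + cim w * cim w) -
      (cre z * cre w + cim z * cim w) ^ 2 = (cre z * cim w - cim z * cre w) ^ 2) by ring.
    lra. }
  assert (Hp : 0 <= Cabs z * Cabs w) by (apply Rmult_le_pos; assumption).
  assert (HX : X <= Cabs z * Cabs w) by (apply sq_le_le; assumption).
  assert (HX' : - X <= Cabs z * Cabs w).
  { apply sq_le_le; [assumption|]. replace ((- X) ^ 2) with (X ^ 2) by ring. assumption. }
  assert (E : Cabs (Cadd z w) ^ 2 = Cabs z ^ 2 + Cabs w ^ 2 + 2 * X).
  { rewrite Hs, Hz, Hw. unfold X, Cnorm2. simpl. ring. }
  split.
  - apply sq_le_le; nra.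
  - destruct (Rle_dec (Cabs z - Cabs w) 0); [lra|].
    apply sq_le_le; nra.
Qed.

Lemma eigen_quad n C v c : (forall k, (k < n)%nat -> matvec n C v k = Cmul (RtoC c) (v k)) ->
  cre (vdot n v (matvec n C v)) = c * vn2 n v.
Proof.
  intros H. rewrite vdot_re. unfold vn2. rewrite <- rsum_scal. apply rsum_ext.
  intros k Hk. rewrite (H k Hk). unfold Cnorm2. simpl. ring.
Qed.

Lemma Cnorm2_pos z : z <> C0 -> 0 < Cnorm2 z.
Proof.
  intros H. destruct (Rlt_dec 0 (Cnorm2 z)) as [|Hn]; [assumption|].
  exfalso. apply H. pose proof (Cnorm2_nonneg z). unfold Cnorm2 in *.
  apply Cext; simpl; nra.
Qed.

Lemma nonzero_vn2 n v : nonzero_vec n v -> 0 < vn2 n v.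
Proof.
  intros [k [Hk Hv]]. apply Rlt_le_trans with (Cnorm2 (v k)).
  - apply Cnorm2_pos; exact Hv.
  - apply (rsum_term n (fun k => Cnorm2 (v k))); [intros; apply Cnorm2_nonneg|exact Hk].
Qed.

Lemma lam_facts M C : (1 <= M)%nat -> HermitianPD M C ->
  0 < lambda_min M C /\ forall e, lambda_min M C * vn2 M e <= cre (vdot M e (matvec M C e)).
Proof.
  intros HM [HH HPD]. destruct M as [|n]; [lia|].
  destruct (MC.bridge n C HH) as [d0 [Hd0 Hq]].
  assert (Hlow : forall lam, is_eigenvalue (S n) C lam -> d0 <= lam /\ 0 < lam).
  { intros lam [v [Hnz Hv]].
    pose proof (eigen_quad _ _ _ _ Hv) as E.
    pose proof (nonzero_vn2 _ _ Hnz) as Hpos.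
    pose proof (HPD v Hnz) as Hp. pose proof (Hq v) as Hb.
    rewrite vdot_self in Hb. rewrite E in Hp, Hb. split.
    - apply (Rmult_le_reg_r (vn2 (S n) v)); assumption.
    - nra. }
  assert (Hl : lambda_min (S n) C = d0).
  { destruct (Inf_glb (is_eigenvalue (S n) C) d0) as [H1 H2].
    - exists d0; exact Hd0.
    - intros x Hx. apply Hlow; exact Hx.
    - unfold lambda_min. apply Rle_antisym.
      + apply H1; exact Hd0.
      + apply H2. intros x Hx; apply Hlow; exact Hx. }
  rewrite Hl. split.
  - apply Hlow; exact Hd0.
  - intros e. rewrite <- vdot_self. apply Hq.
Qed.

Lemma eps_bound M Cm i g e : (1 <= M)%nat -> HermitianPD M (Cm i g) -> in_S M Cm i g e ->
  vnorm M e <= epsig M Cm i g /\ 0 < epsig M Cm i g.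
Proof.
  intros HM HC HS. destruct (lam_facts M (Cm i g) HM HC) as [Hpos Hq].
  unfold in_S in HS. pose proof (Hq e) as He.
  unfold epsig. set (L := lambda_min M (Cm i g)) in *.
  assert (Hs : 0 < sqrt L) by (apply sqrt_lt_R0; exact Hpos).
  assert (Hs2 : sqrt L ^ 2 = L) by (apply pow2_sqrt; lra).
  pose proof (vnorm_sq M e). pose proof (vnorm_nonneg M e).
  split.
  - assert (Hx : vnorm M e * sqrt L <= 1).
    { apply sq_le_le; [lra|]. rewrite Rpow_mult_distr. rewrite H, Hs2. lra. }
    unfold Rdiv. rewrite Rmult_1_l. apply (Rmult_le_reg_r (sqrt L)); [exact Hs|].
    rewrite Rinv_l by lra. exact Hx.
  - unfold Rdiv. rewrite Rmult_1_l. apply Rinv_0_lt_compat. exact Hs.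
Qed.

Lemma vdot_vadd n a b c : vdot n a (vadd b c) = Cadd (vdot n a b) (vdot n a c).
Proof.
  apply Cext; simpl; rewrite ?vdot_re, ?vdot_im; rewrite <- rsum_add; apply rsum_ext;
    intros; unfold vadd; simpl; ring.
Qed.

Lemma SINR_ge M G hhat sigma w i g e t : 0 <= t -> 0 < sigma i g ->
  t * (rsum G (fun l => if Nat.eq_dec l g then 0 else
          Cnorm2 (vdot M (w l) (vadd (hhat i g) e))) + sigma i g ^ 2)
  <= Cnorm2 (vdot M (w g) (vadd (hhat i g) e)) ->
  SINR M G hhat sigma w i g e >= t.
Proof.
  intros Ht Hs H. unfold SINR. cbv zeta.
  set (D := rsum G _ + _) in *.
  assert (HD : 0 < D).
  { unfold D. assert (0 <= rsum G (fun l => if Nat.eq_dec l g then 0 else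
          Cnorm2 (vdot M (w l) (vadd (hhat i g) e)))).
    { apply rsum_nonneg. intros k _. destruct (Nat.eq_dec k g); [lra|apply Cnorm2_nonneg]. }
    nra. }
  apply Rle_ge. apply (Rmult_le_reg_r D); [exact HD|].
  unfold Rdiv. rewrite Rmult_assoc, Rinv_l by lra. lra.
Qed.

Lemma part_a M G N hhat sigma Cm (HM : (1 <= M)%nat)
  (Hsigma : forall g i, (g < G)%nat -> (i < N g)%nat -> 0 < sigma i g)
  (HC : forall g i, (g < G)%nat -> (i < N g)%nat -> HermitianPD M (Cm i g)) :
  forall (t : R) (w : nat -> cvec), 0 <= t ->
     app_feasible M G N hhat sigma Cm w t ->
     forall g i e, (g < G)%nat -> (i < N g)%nat -> in_S M Cm i g e ->
       SINR M G hhat sigma w i g e >= t.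
Proof.
  intros t w Ht Hf g i e Hg Hi HS.
  destruct (eps_bound M Cm i g e HM (HC g i Hg Hi) HS) as [He Hep].
  set (ep := epsig M Cm i g) in *.
  set (h := hhat i g).
  assert (Hup : forall l, Cabs (vdot M (w l) (vadd h e)) <= Cabs (vdot M (w l) h) + ep * vnorm M (w l)).
  { intros l. rewrite vdot_vadd. destruct (Cabs_tri (vdot M (w l) h) (vdot M (w l) e)) as [T _].
    pose proof (CS_abs M (w l) e). pose proof (vnorm_nonneg M (w l)).
    assert (vnorm M (w l) * vnorm M e <= ep * vnorm M (w l)) by nra. lra. }
  assert (Hlo : Cabs (vdot M (w g) h) - ep * vnorm M (w g) <= Cabs (vdot M (w g) (vadd h e))).
  { rewrite vdot_vadd. destruct (Cabs_tri (vdot M (w g) h) (vdot M (w g) e)) as [_ T].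
    pose proof (CS_abs M (w g) e). pose proof (vnorm_nonneg M (w g)).
    assert (vnorm M (w g) * vnorm M e <= ep * vnorm M (w g)) by nra. lra. }
  pose proof (Hf g i Hg Hi) as Hz. unfold zeta in Hz. fold ep h in Hz.
  set (Dp := rsum G (fun l => if Nat.eq_dec l g then 0 else
                 (Cabs (vdot M (w l) h) + ep * vnorm M (w l)) ^ 2) + sigma i g ^ 2) in *.
  pose proof (Hsigma g i Hg Hi) as Hsg.
  apply SINR_ge; [exact Ht|exact Hsg|]. fold h.
  set (D := rsum G _ + _).
  assert (HDD : D <= Dp).
  { unfold D, Dp. apply Rplus_le_compat_r. apply rsum_le. intros l _.
    destruct (Nat.eq_dec l g); [lra|].
    rewrite <- Cabs_sq. pose proof (Hup l). pose proof (Cabs_nonneg (vdot M (w l) (vadd h e))).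
    apply pow_incr. lra. }
  assert (HDp : 0 <= Dp).
  { unfold Dp. assert (0 <= rsum G (fun l => if Nat.eq_dec l g then 0 else
                 (Cabs (vdot M (w l) h) + ep * vnorm M (w l)) ^ 2)).
    { apply rsum_nonneg. intros k _. destruct (Nat.eq_dec k g); [lra|apply pow2_ge_0]. }
    nra. }
  assert (Hst : 0 <= sqrt t * sqrt Dp) by (apply Rmult_le_pos; apply sqrt_pos).
  assert (Hnum : sqrt t * sqrt Dp <= Cabs (vdot M (w g) (vadd h e))) by lra.
  assert (Hsq : (sqrt t * sqrt Dp) ^ 2 = t * Dp).
  { rewrite Rpow_mult_distr, !pow2_sqrt; lra. }
  rewrite <- Cabs_sq.
  assert (t * Dp <= Cabs (vdot M (w g) (vadd h e)) ^ 2).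
  { rewrite <- Hsq. apply pow_incr. lra. }
  assert (t * D <= t * Dp) by (apply Rmult_le_compat_l; lra).
  lra.
Qed.

Lemma rsum_zero n : rsum n (fun _ => 0) = 0.
Proof. induction n; simpl; [reflexivity|]. rewrite IHn. lra. Qed.

Definition zv : cvec := fun _ => C0.
Definition zw : nat -> cvec := fun _ => zv.

Lemma vn2_zero n : vn2 n zv = 0.
Proof. unfold vn2. rewrite <- (rsum_zero n). apply rsum_ext. intros; unfold zv, Cnorm2; simpl; ring. Qed.
Lemma vnorm_zero n : vnorm n zv = 0.
Proof. unfold vnorm. fold (vn2 n zv). rewrite vn2_zero. apply sqrt_0. Qed.
Lemma vdot_zero_l n b : Cnorm2 (vdot n zv b) = 0.
Proof.
  unfold Cnorm2. rewrite vdot_re, vdot_im.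
  rewrite (rsum_ext _ _ (fun _ => 0)) by (intros; unfold zv; simpl; ring).
  rewrite (rsum_ext n (fun k => cre (zv k) * cim (b k) - cim (zv k) * cre (b k)) (fun _ => 0))
    by (intros; unfold zv; simpl; ring).
  rewrite rsum_zero. ring.
Qed.
Lemma in_S_zero M Cm i g : in_S M Cm i g zv.
Proof.
  unfold in_S. rewrite vdot_re.
  rewrite (rsum_ext _ _ (fun _ => 0)) by (intros; unfold zv; simpl; ring).
  rewrite rsum_zero. lra.
Qed.

Definition Iset M G hhat sigma Cm (w : nat -> cvec) i g : R -> Prop :=
  fun s => exists e, in_S M Cm i g e /\ s = SINR M G hhat sigma w i g e.

Lemma SINR_nonneg M G hhat sigma w i g e : 0 < sigma i g -> 0 <= SINR M G hhat sigma w i g e.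
Proof.
  intros Hs. unfold SINR. cbv zeta. unfold Rdiv. apply Rmult_le_pos.
  - apply Cnorm2_nonneg.
  - assert (0 <= rsum G (fun l => if Nat.eq_dec l g then 0 else
          Cnorm2 (vdot M (w l) (vadd (hhat i g) e)))).
    { apply rsum_nonneg. intros k _. destruct (Nat.eq_dec k g); [lra|apply Cnorm2_nonneg]. }
    left. apply Rinv_0_lt_compat. nra.
Qed.

Lemma Iw_facts M G hhat sigma Cm w i g : 0 < sigma i g ->
  (forall e, in_S M Cm i g e -> Inf (Iset M G hhat sigma Cm w i g) <= SINR M G hhat sigma w i g e) /\
  0 <= Inf (Iset M G hhat sigma Cm w i g) /\
  (forall L', (forall e, in_S M Cm i g e -> L' <= SINR M G hhat sigma w i g e) ->
     L' <= Inf (Iset M G hhat sigma Cm w i g)).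
Proof.
  intros Hs.
  destruct (Inf_glb (Iset M G hhat sigma Cm w i g) 0) as [H1 H2].
  - exists (SINR M G hhat sigma w i g zv). exists zv. split; [apply in_S_zero|reflexivity].
  - intros x [e [_ ->]]. apply SINR_nonneg; exact Hs.
  - split; [|split].
    + intros e He. apply H1. exists e; split; [exact He|reflexivity].
    + apply H2. intros x [e [_ ->]]. apply SINR_nonneg; exact Hs.
    + intros L' HL. apply H2. intros x [e [He ->]]. apply HL; exact He.
Qed.

Lemma worst_ge M G N hhat sigma Cm w c : (1 <= G)%nat -> (forall g, (g < G)%nat -> (1 <= N g)%nat) ->
  (forall g i, (g < G)%nat -> (i < N g)%nat -> c <= Inf (Iset M G hhat sigma Cm w i g)) ->
  c <= worst_SINR M G N hhat sigma Cm w.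
Proof.
  intros HG HN H. unfold worst_SINR. apply fmin_ge; [exact HG|].
  intros g Hg. apply fmin_ge; [apply HN; exact Hg|]. intros i Hi. apply H; assumption.
Qed.

Lemma worst_le M G N hhat sigma Cm w g i : (g < G)%nat -> (i < N g)%nat ->
  worst_SINR M G N hhat sigma Cm w <= Inf (Iset M G hhat sigma Cm w i g).
Proof.
  intros Hg Hi. unfold worst_SINR.
  eapply Rle_trans; [apply (fmin_le _ _ g Hg)|].
  pose proof (fmin_le (N g) (fun i => Inf (Iset M G hhat sigma Cm w i g)) i Hi) as X.
  unfold Iset in X. cbv beta in X. exact X.
Qed.

Lemma inW_bound M G pc gamma w : (1 <= G)%nat -> 0 < gamma -> in_W M G pc gamma w ->
  vn2 M (w 0%nat) <= gamma + rsum M (fun _ => gamma).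
Proof.
  intros HG Hg HW. assert (0 <= rsum M (fun _ => gamma)) by (apply rsum_nonneg; intros; lra).
  destruct pc; unfold in_W in HW.
  - rewrite <- vnorm_sq.
    assert (vnorm M (w 0%nat) ^ 2 <= rsum G (fun g => vnorm M (w g) ^ 2)).
    { apply (rsum_term G (fun g => vnorm M (w g) ^ 2)); [intros; apply pow2_ge_0|lia]. }
    lra.
  - assert (vn2 M (w 0%nat) <= rsum M (fun _ => gamma)).
    { apply rsum_le. intros m Hm. eapply Rle_trans; [|apply (HW m Hm)].
      apply (rsum_term G (fun g => Cnorm2 (w g m))); [intros; apply Cnorm2_nonneg|lia]. }
    lra.
Qed.

Lemma SINR_le M G hhat sigma w i g e : 0 < sigma i g ->
  SINR M G hhat sigma w i g e <= Cnorm2 (vdot M (w g) (vadd (hhat i g) e)) / sigma i g ^ 2.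
Proof.
  intros Hs. unfold SINR. cbv zeta.
  assert (0 <= rsum G (fun l => if Nat.eq_dec l g then 0 else
          Cnorm2 (vdot M (w l) (vadd (hhat i g) e)))).
  { apply rsum_nonneg. intros k _. destruct (Nat.eq_dec k g); [lra|apply Cnorm2_nonneg]. }
  unfold Rdiv. apply Rmult_le_compat_l; [apply Cnorm2_nonneg|].
  apply Rinv_le_contravar; [nra|lra].
Qed.

Lemma inW_zero M G pc gamma : 0 < gamma -> in_W M G pc gamma zw.
Proof.
  intros Hg. destruct pc; simpl.
  - rewrite (rsum_ext _ _ (fun _ => 0)) by (intros; unfold zw; rewrite vnorm_zero; ring).
    rewrite rsum_zero; lra.
  - intros m _. rewrite (rsum_ext _ _ (fun _ => 0)) by (intros; unfold zw, zv, Cnorm2; simpl; ring).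
    rewrite rsum_zero; lra.
Qed.

Lemma feasible_zero M G N hhat sigma Cm : app_feasible M G N hhat sigma Cm zw 0.
Proof.
  intros g i _ _. unfold zeta, zw. rewrite vnorm_zero, sqrt_0.
  unfold Cabs. rewrite vdot_zero_l, sqrt_0. lra.
Qed.

Lemma part_b M G N hhat sigma Cm pc gamma (HM : (1 <= M)%nat) (HG : (1 <= G)%nat)
  (HN : forall g, (g < G)%nat -> (1 <= N g)%nat)
  (Hsigma : forall g i, (g < G)%nat -> (i < N g)%nat -> 0 < sigma i g)
  (HC : forall g i, (g < G)%nat -> (i < N g)%nat -> HermitianPD M (Cm i g))
  (Hgamma : 0 < gamma) :
  is_lub (fun t => 0 <= t /\ exists w, in_W M G pc gamma w /\ app_feasible M G N hhat sigma Cm w t)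
         (V_App M G N hhat sigma Cm pc gamma) /\
  is_lub (fun r => exists w, in_W M G pc gamma w /\ r = worst_SINR M G N hhat sigma Cm w)
         (V_MMF M G N hhat sigma Cm pc gamma) /\
  V_App M G N hhat sigma Cm pc gamma <= V_MMF M G N hhat sigma Cm pc gamma.
Proof.
  assert (H0 : (0 < G)%nat) by lia. assert (H00 : (0 < N 0%nat)%nat) by (pose proof (HN 0%nat H0); lia).
  pose proof (Hsigma 0%nat 0%nat H0 H00) as Hs0.
  set (B := vn2 M (vadd (hhat 0%nat 0%nat) zv) * (gamma + rsum M (fun _ => gamma)) / sigma 0%nat 0%nat ^ 2).
  assert (HB : forall w, in_W M G pc gamma w -> SINR M G hhat sigma w 0 0 zv <= B).
  { intros w Hw. eapply Rle_trans; [apply SINR_le; exact Hs0|].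
    unfold B, Rdiv. apply Rmult_le_compat_r.
    - left. apply Rinv_0_lt_compat. nra.
    - eapply Rle_trans; [apply CS|]. rewrite Rmult_comm.
      apply Rmult_le_compat_l; [apply vn2_nonneg|]. apply (inW_bound M G pc gamma); assumption. }
  assert (LA : is_lub (fun t => 0 <= t /\ exists w, in_W M G pc gamma w /\ app_feasible M G N hhat sigma Cm w t)
         (V_App M G N hhat sigma Cm pc gamma)).
  { apply Sup_lub.
    - exists 0. split; [lra|]. exists zw. split; [apply inW_zero; exact Hgamma|apply feasible_zero].
    - exists B. intros t [Ht [w [Hw Hf]]].
      pose proof (part_a M G N hhat sigma Cm HM Hsigma HC t w Ht Hf 0 0 zv H0 H00 (in_S_zero _ _ _ _)).
      pose proof (HB w Hw). lra. }
  assert (LM : is_lub (fun r => exists w, in_W M G pc gamma w /\ r = worst_SINR M G N hhat sigma Cm w)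
         (V_MMF M G N hhat sigma Cm pc gamma)).
  { apply Sup_lub.
    - exists (worst_SINR M G N hhat sigma Cm zw). exists zw. split; [apply inW_zero; exact Hgamma|reflexivity].
    - exists B. intros r [w [Hw ->]].
      eapply Rle_trans; [apply (worst_le _ _ _ _ _ _ _ 0 0 H0 H00)|].
      destruct (Iw_facts M G hhat sigma Cm w 0 0 Hs0) as [I1 _].
      eapply Rle_trans; [apply I1; apply in_S_zero|]. apply HB; exact Hw. }
  split; [exact LA|]. split; [exact LM|].
  apply (lub_least _ _ _ LA). intros t [Ht [w [Hw Hf]]].
  apply Rle_trans with (worst_SINR M G N hhat sigma Cm w).
  - apply worst_ge; [exact HG|exact HN|]. intros g i Hg Hi.
    destruct (Iw_facts M G hhat sigma Cm w i g (Hsigma g i Hg Hi)) as [_ [_ I3]].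
    apply I3. intros e He. apply Rge_le. apply (part_a M G N hhat sigma Cm HM Hsigma HC t w Ht Hf g i e Hg Hi He).
  - apply (lub_ub _ _ _ LM). exists w. split; [exact Hw|reflexivity].
Qed.

Lemma scalar_matvec M (C : cmat) c v :
  (forall k l, (k < M)%nat -> (l < M)%nat -> C k l = if Nat.eq_dec k l then RtoC c else C0) ->
  forall k, (k < M)%nat -> matvec M C v k = Cmul (RtoC c) (v k).
Proof.
  intros H k Hk. apply Cext; unfold matvec; [rewrite csum_re|rewrite csum_im].
  - rewrite (rsum_ext M _ (fun l => if Nat.eq_dec k l then c * cre (v l) else 0)).
    + rewrite rsum_delta by exact Hk. simpl; ring.
    + intros l Hl. rewrite (H k l Hk Hl). destruct (Nat.eq_dec k l); simpl; ring.
  - rewrite (rsum_ext M _ (fun l => if Nat.eq_dec k l then c * cim (v l) else 0)).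
    + rewrite rsum_delta by exact Hk. simpl; ring.
    + intros l Hl. rewrite (H k l Hk Hl). destruct (Nat.eq_dec k l); simpl; ring.
Qed.

Lemma epsig_mu M Cm i mu : (1 <= M)%nat -> 0 < mu ->
  (forall k l, (k < M)%nat -> (l < M)%nat -> Cm i 0%nat k l = if Nat.eq_dec k l then RtoC (/ mu ^ 2) else C0) ->
  epsig M Cm i 0 = mu.
Proof.
  intros HM Hmu Hsc. set (c := / mu ^ 2).
  assert (Hl : lambda_min M (Cm i 0%nat) = c).
  { assert (Hev : forall lam, is_eigenvalue M (Cm i 0%nat) lam -> lam = c).
    { intros lam [v [[k [Hk Hv]] Hv2]].
      pose proof (Hv2 k Hk) as E. rewrite (scalar_matvec M _ c v Hsc k Hk) in E.
      pose proof (f_equal cre E) as E1. pose proof (f_equal cim E) as E2. simpl in E1, E2.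
      destruct (Req_dec lam c) as [|Hne]; [assumption|]. exfalso. apply Hv.
      apply Cext; simpl.
      - apply (Rmult_eq_reg_l (c - lam)); [|lra]. ring_simplify. nra.
      - apply (Rmult_eq_reg_l (c - lam)); [|lra]. ring_simplify. nra. }
    assert (Hc : is_eigenvalue M (Cm i 0%nat) c).
    { exists (fun k => if Nat.eq_dec k 0 then mkC 1 0 else C0). split.
      - exists 0%nat. split; [lia|]. simpl. intros Heq. injection Heq. lra.
      - intros k Hk. apply scalar_matvec; assumption. }
    destruct (Inf_glb (is_eigenvalue M (Cm i 0%nat)) c) as [H1 H2].
    - exists c; exact Hc.
    - intros x Hx. rewrite (Hev x Hx). lra.
    - unfold lambda_min. apply Rle_antisym.
      + apply H1; exact Hc.
      + apply H2. intros x Hx. rewrite (Hev x Hx). lra. }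
  unfold epsig. rewrite Hl. unfold c.
  replace (/ mu ^ 2) with ((/ mu) ^ 2) by (field; lra).
  rewrite sqrt_pow2 by (left; apply Rinv_0_lt_compat; exact Hmu).
  field. lra.
Qed.

Lemma construct M Cm hhat (w : nat -> cvec) i mu : (1 <= M)%nat -> 0 < mu ->
  (forall k l, (k < M)%nat -> (l < M)%nat -> Cm i 0%nat k l = if Nat.eq_dec k l then RtoC (/ mu ^ 2) else C0) ->
  exists e, in_S M Cm i 0 e /\
    Cnorm2 (vdot M (w 0%nat) (vadd (hhat i 0%nat) e)) =
    (if Rle_dec (mu * vnorm M (w 0%nat)) (Cabs (vdot M (w 0%nat) (hhat i 0%nat)))
     then (Cabs (vdot M (w 0%nat) (hhat i 0%nat)) - mu * vnorm M (w 0%nat)) ^ 2 else 0).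
Proof.
  intros HM Hmu Hsc.
  set (w0 := w 0%nat). set (h := hhat i 0%nat). set (z := vdot M w0 h).
  set (a := Cabs z). set (nw := vnorm M w0). set (N2 := vn2 M w0).
  assert (Ha2 : a ^ 2 = Cnorm2 z) by apply Cabs_sq.
  assert (Hn2 : nw ^ 2 = N2) by apply vnorm_sq.
  assert (Ha0 : 0 <= a) by apply Cabs_nonneg.
  assert (Hn0 : 0 <= nw) by apply vnorm_nonneg.
  assert (Hsc2 : forall k0, exists e,
    cre (vdot M e (matvec M (Cm i 0%nat) e)) = / mu ^ 2 * (k0 ^ 2 * a ^ 2 * N2) /\
    Cnorm2 (vdot M w0 (vadd h e)) = (1 - k0 * N2) ^ 2 * a ^ 2).
  { intros k0. set (c := mkC (- k0 * cre z) (- k0 * cim z)).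
    exists (fun k => Cmul c (w0 k)). split.
    - rewrite (eigen_quad M _ _ (/ mu ^ 2)) by (apply scalar_matvec; exact Hsc).
      f_equal. unfold vn2. rewrite Ha2. unfold N2, vn2. rewrite <- rsum_scal. apply rsum_ext.
      intros k _. unfold c, Cnorm2; simpl; ring.
    - rewrite vdot_vadd. fold z.
      assert (Er : cre (vdot M w0 (fun k => Cmul c (w0 k))) = cre c * N2).
      { rewrite vdot_re. unfold N2, vn2. rewrite <- rsum_scal. apply rsum_ext.
        intros k _. unfold Cnorm2; simpl; ring. }
      assert (Ei : cim (vdot M w0 (fun k => Cmul c (w0 k))) = cim c * N2).
      { rewrite vdot_im. unfold N2, vn2. rewrite <- rsum_scal. apply rsum_ext.
        intros k _. unfold Cnorm2; simpl; ring. }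
      unfold Cnorm2 at 1. cbn [cre cim Cadd]. rewrite Er, Ei, Ha2. unfold c, Cnorm2. cbn [cre cim]. ring. }
  destruct (Req_dec N2 0) as [HN0|HN0].
  - assert (nw = 0) by nra.
    assert (a <= 0).
    { pose proof (CS_abs M w0 h). fold z a nw in H0. pose proof (vnorm_nonneg M h). nra. }
    assert (a = 0) by lra.
    destruct (Hsc2 0) as [e [E1 E2]]. exists e. split.
    + unfold in_S. rewrite E1. rewrite H1, HN0. lra.
    + fold w0 h z a nw. rewrite E2. rewrite H, H1.
      destruct (Rle_dec (mu * 0) 0); [ring|ring].
  - assert (Hnp : 0 < nw).
    { destruct (Rle_lt_or_eq_dec 0 nw Hn0) as [|E]; [assumption|].
      exfalso. apply HN0. rewrite <- Hn2, <- E. ring. }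
    fold w0 h z a nw.
    destruct (Rle_dec (mu * nw) a) as [Hle|Hlt].
    + assert (Hap : 0 < a) by nra.
      destruct (Hsc2 (mu / (a * nw))) as [e [E1 E2]]. exists e. split.
      * unfold in_S. rewrite E1. rewrite <- Hn2. right. field. lra.
      * rewrite E2, <- Hn2. field. lra.
    + destruct (Hsc2 (1 / N2)) as [e [E1 E2]]. exists e. split.
      * unfold in_S. rewrite E1.
        assert (a ^ 2 < mu ^ 2 * N2) by (rewrite <- Hn2; nra).
        assert (HN2p : 0 < N2) by (rewrite <- Hn2; nra).
        replace (/ mu ^ 2 * ((1 / N2) ^ 2 * a ^ 2 * N2)) with (a ^ 2 / (mu ^ 2 * N2)) by (field; lra).
        left. apply (Rmult_lt_reg_r (mu ^ 2 * N2)); [nra|].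
        unfold Rdiv. rewrite Rmult_assoc, Rinv_l by nra. lra.
      * rewrite E2. replace (1 - 1 / N2 * N2) with 0 by (field; lra). ring.
Qed.

Lemma SINR_G1 M hhat sigma w i e :
  SINR M 1 hhat sigma w i 0 e = Cnorm2 (vdot M (w 0%nat) (vadd (hhat i 0%nat) e)) / sigma i 0%nat ^ 2.
Proof.
  unfold SINR. cbv zeta. cbn [rsum]. destruct (Nat.eq_dec 0 0) as [_|C]; [|congruence].
  rewrite !Rplus_0_l. reflexivity.
Qed.

Lemma part_c M N hhat sigma Cm pc gamma mu (HM : (1 <= M)%nat)
  (HN : forall g, (g < 1)%nat -> (1 <= N g)%nat)
  (Hsigma : forall g i, (g < 1)%nat -> (i < N g)%nat -> 0 < sigma i g)
  (HC : forall g i, (g < 1)%nat -> (i < N g)%nat -> HermitianPD M (Cm i g))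
  (Hgamma : 0 < gamma) (Hmu : 0 < mu)
  (Hsc : forall i k l, (i < N 0)%nat -> (k < M)%nat -> (l < M)%nat ->
        Cm i 0%nat k l = (if Nat.eq_dec k l then RtoC (/ mu ^ 2) else C0)) :
  V_App M 1 N hhat sigma Cm pc gamma = V_MMF M 1 N hhat sigma Cm pc gamma.
Proof.
  destruct (part_b M 1 N hhat sigma Cm pc gamma HM (le_n 1) HN Hsigma HC Hgamma) as [LA [LM Hle]].
  apply Rle_antisym; [exact Hle|].
  apply (lub_least _ _ _ LM). intros r [w [Hw ->]].
  assert (V0 : 0 <= V_App M 1 N hhat sigma Cm pc gamma).
  { apply (lub_ub _ _ _ LA). split; [lra|]. exists zw. split; [apply inW_zero; exact Hgamma|apply feasible_zero]. }
  assert (H01 : (0 < 1)%nat) by lia.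
  destruct (Classical_Prop.classic (forall i, (i < N 0)%nat ->
      mu * vnorm M (w 0%nat) <= Cabs (vdot M (w 0%nat) (hhat i 0%nat)))) as [Hall|Hex].
  - apply (lub_ub _ _ _ LA). split.
    + apply worst_ge; [lia|exact HN|]. intros g i Hg Hi.
      destruct (Iw_facts M 1 hhat sigma Cm w i g (Hsigma g i Hg Hi)) as [_ [I2 _]]. exact I2.
    + exists w. split; [exact Hw|]. intros g i Hg Hi.
      assert (g = 0%nat) by lia. subst g.
      pose proof (Hsigma 0%nat i H01 Hi) as Hs.
      unfold zeta. rewrite (epsig_mu M Cm i mu HM Hmu (fun k l => Hsc i k l Hi)).
      cbn [rsum]. destruct (Nat.eq_dec 0 0) as [_|C]; [|congruence].
      rewrite !Rplus_0_l. rewrite sqrt_pow2 by lra.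
      set (t := worst_SINR M 1 N hhat sigma Cm w).
      destruct (construct M Cm hhat w i mu HM Hmu (fun k l => Hsc i k l Hi)) as [e [He E]].
      pose proof (Hall i Hi) as Hai.
      destruct (Rle_dec (mu * vnorm M (w 0%nat)) (Cabs (vdot M (w 0%nat) (hhat i 0%nat)))) as [_|C]; [|contradiction].
      assert (Ht : t <= (Cabs (vdot M (w 0%nat) (hhat i 0%nat)) - mu * vnorm M (w 0%nat)) ^ 2 / sigma i 0%nat ^ 2).
      { eapply Rle_trans; [apply (worst_le _ _ _ _ _ _ _ 0 i H01 Hi)|].
        destruct (Iw_facts M 1 hhat sigma Cm w i 0 Hs) as [I1 _].
        eapply Rle_trans; [apply I1; exact He|]. rewrite SINR_G1, E. lra. }
      assert (Ht0 : 0 <= t).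
      { apply worst_ge; [lia|exact HN|]. intros g j Hg2 Hj.
        destruct (Iw_facts M 1 hhat sigma Cm w j g (Hsigma g j Hg2 Hj)) as [_ [I2 _]]. exact I2. }
      set (X := Cabs (vdot M (w 0%nat) (hhat i 0%nat)) - mu * vnorm M (w 0%nat)) in *.
      assert (sqrt t * sigma i 0%nat <= X).
      { apply sq_le_le; [unfold X; lra|]. rewrite Rpow_mult_distr, pow2_sqrt by exact Ht0.
        apply (Rmult_le_reg_r (/ sigma i 0%nat ^ 2)).
        - apply Rinv_0_lt_compat. nra.
        - rewrite Rmult_assoc, Rinv_r by (apply pow_nonzero; lra). rewrite Rmult_1_r. exact Ht. }
      unfold X in H. lra.
  - apply Classical_Pred_Type.not_all_ex_not in Hex. destruct Hex as [i Hi].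
    apply Classical_Prop.imply_to_and in Hi. destruct Hi as [Hi Hn].
    pose proof (Hsigma 0%nat i H01 Hi) as Hs.
    destruct (construct M Cm hhat w i mu HM Hmu (fun k l => Hsc i k l Hi)) as [e [He E]].
    destruct (Rle_dec (mu * vnorm M (w 0%nat)) (Cabs (vdot M (w 0%nat) (hhat i 0%nat)))) as [C|_]; [contradiction|].
    eapply Rle_trans; [apply (worst_le _ _ _ _ _ _ _ 0 i H01 Hi)|].
    destruct (Iw_facts M 1 hhat sigma Cm w i 0 Hs) as [I1 _].
    eapply Rle_trans; [apply I1; exact He|]. rewrite SINR_G1, E.
    unfold Rdiv. rewrite Rmult_0_l. exact V0.
Qed.

Theorem mainTheorem4
  (M G : nat) (N : nat -> nat) (hhat : nat -> nat -> cvec) (sigma : nat -> nat -> R)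
  (Cm : nat -> nat -> cmat) (pc : PowerConstraint) (gamma : R)
  (HM : (1 <= M)%nat) (HG : (1 <= G)%nat)
  (HN : forall g, (g < G)%nat -> (1 <= N g)%nat)
  (Hsigma : forall g i, (g < G)%nat -> (i < N g)%nat -> 0 < sigma i g)
  (HC : forall g i, (g < G)%nat -> (i < N g)%nat -> HermitianPD M (Cm i g))
  (Hgamma : 0 < gamma) :
  (* (a) *)
  (forall (t : R) (w : nat -> cvec), 0 <= t -> in_W M G pc gamma w ->
     app_feasible M G N hhat sigma Cm w t ->
     forall g i e, (g < G)%nat -> (i < N g)%nat -> in_S M Cm i g e ->
       SINR M G hhat sigma w i g e >= t)
  /\
  (* (b) *)
  V_App M G N hhat sigma Cm pc gamma <= V_MMF M G N hhat sigma Cm pc gamma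
  /\
  (* (c) *)
  (forall mu : R, 0 < mu -> G = 1%nat ->
     (forall i k l, (i < N 0)%nat -> (k < M)%nat -> (l < M)%nat ->
        Cm i 0%nat k l = (if Nat.eq_dec k l then RtoC (/ mu ^ 2) else C0)) ->
     V_App M G N hhat sigma Cm pc gamma = V_MMF M G N hhat sigma Cm pc gamma).
Proof.
  split; [|split].
  - intros t w Ht _ Hf. exact (part_a M G N hhat sigma Cm HM Hsigma HC t w Ht Hf).
  - destruct (part_b M G N hhat sigma Cm pc gamma HM HG HN Hsigma HC Hgamma) as [_ [_ H]]. exact H.
  - intros mu Hmu HG1 Hsc. subst G. exact (part_c M N hhat sigma Cm pc gamma mu HM HN Hsigma HC Hgamma Hmu Hsc).
Qed.
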